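(* Let $p>3$ be a prime, $q=p^e$, and let $n\ge 0$ be an even integer. Then: (i) $D_{n,3}(1,x)=\dfrac{1}{2^n}f_n(1-4x)$ for every $x\in\mathbb{F}_q$; (ii) $D_{n,3}(1,x)$ is a permutation polynomial of $\mathbb{F}_q$ if and only if $f_n(x)$ is a permutation polynomial of $\mathbb{F}_q$.
   Context: For $n\ge 1$ and $a\in\mathbb{F}_q$, $D_{n,3}(a,x)=\sum_{i=0}^{\lfloor n/2\rfloor}\frac{n-3i}{n-i}\binom{n-i}{i}(-x)^i a^{n-2i}\in\mathbb{F}_q[x]$, where each coefficient $\frac{n-3i}{n-i}\binom{n-i}{i}$ is an integer read modulo $p$; and $D_{0,3}(a,x)=-1$. For even $n\ge0$, $f_n(x)\in\mathbb{Z}[x]$ (viewed in $\mathbb{F}_q[x]$ by reduction mod $p$) is $$f_n(x)=-x^{n/2}+\sum_{j=0}^{n/2-1}\frac{3n-8j-1}{n+1}\binom{n+1}{2j+1}x^j,$$ where $\frac{3n-8j-1}{n+1}\binom{n+1}{2j+1}=3\binom{n}{2j+1}-\binom{n}{2j}$ is an integer. A polynomial $g\in\mathbb{F}_q[x]$ is a permutation polynomial of $\mathbb{F}_q$ if $c\mapsto g(c)$ is a bijection $\mathbb{F}_q\to\mathbb{F}_q$. *)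

(* Defs.v *)
From HB Require Import structures.
From mathcomp Require Import all_boot all_order all_algebra all_field.
Set Implicit Arguments. Unset Strict Implicit. Unset Printing Implicit Defensive.
Import Order.TTheory GRing.Theory Num.Theory.
Local Open Scope ring_scope.

(* Integer coefficient (n-3i)/(n-i) * C(n-i,i) of D_{n,3}; the division is exact. *)
Definition Dcoef (n i : nat) : int :=
  (((n%:Z - (3 * i)%N%:Z) * ('C(n - i, i))%:Z) %/ (n - i)%N%:Z)%Z.

Definition Dpoly (F : ringType) (n : nat) (a : F) : {poly F} :=
  if n is 0 then -1 else
  \sum_(i < n./2.+1) ((Dcoef n i)%:~R * a ^+ (n - 2 * i)) *: (- 'X) ^+ i.

(* Integer coefficient (3n-8j-1)/(n+1) * C(n+1,2j+1) of f_n; the division is exact. *)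
Definition fcoef (n j : nat) : int :=
  ((((3 * n)%N%:Z - (8 * j)%N%:Z - 1) * ('C(n.+1, (2 * j).+1))%:Z) %/ (n.+1)%:Z)%Z.

Definition fpoly (F : ringType) (n : nat) : {poly F} :=
  - 'X^(n./2) + \sum_(j < n./2) (fcoef n j)%:~R *: 'X^j.

Definition is_permpoly (F : finFieldType) (g : {poly F}) : Prop :=
  bijective (fun c : F => g.[c]).

(* Main.v *)
Require Import Defs.
From HB Require Import structures.
From mathcomp Require Import all_boot all_order all_algebra all_field.
From mathcomp Require Import zify ring.
Set Implicit Arguments. Unset Strict Implicit. Unset Printing Implicit Defensive.
Import GRing.Theory.
Local Open Scope ring_scope.

Lemma sum_trunc (R : nmodType) (G : nat -> R) K N :
  (forall i, (K <= i)%N -> G i = 0) -> (K <= N)%N ->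
  \sum_(i < N) G i = \sum_(i < K) G i.
Proof.
move=> G0 hKN; rewrite -(subnKC hKN); elim: (N - K)%N => [|d IH]; first by rewrite addn0.
by rewrite addnS big_ord_recr /= IH G0 ?addr0 // leq_addr.
Qed.

Definition ee (R : ringType) (x : R) m := \sum_(i < m.+1) ('C(m - i, i))%:R * (- x) ^+ i.
Definition AA (R : ringType) (y : R) m := \sum_(j < m.+1) ('C(m.+1, j.*2.+1))%:R * y ^+ j.

Lemma binP' m i : 'C(m.+1 - i, i.+1) = ('C(m - i, i.+1) + 'C(m - i, i))%N.
Proof.
case: (leqP i m) => h; first by rewrite subSn // binS.
have -> : (m.+1 - i = 0)%N by lia.
have -> : (m - i = 0)%N by lia.
rewrite !bin0n; case: i h => //.
Qed.

Lemma ee_rec (R : comRingType) (x : R) m : ee x m.+2 = ee x m.+1 - x * ee x m.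
Proof.
rewrite /ee big_ord_recl [in RHS]big_ord_recl /=.
under eq_bigr => i _ do rewrite /bump /= add1n subSS binP' natrD mulrDl.
under [in RHS]eq_bigr => i _ do rewrite /bump /= add1n subSS.
rewrite big_split /= -addrA; congr (_ + _).
have -> : \sum_(i < m.+2) ('C(m - i, i))%:R * (- x) ^+ i.+1 =
   - x * \sum_(i < m.+1) ('C(m - i, i))%:R * (- x) ^+ i.
  rewrite mulr_sumr (@sum_trunc _ (fun i => ('C(m - i, i))%:R * (- x) ^+ i.+1) m.+1) //.
    by apply: eq_bigr => i _; rewrite exprS; ring.
  move=> i hi; rewrite bin_small ?mul0r //; lia.
rewrite (@sum_trunc _ (fun i => ('C(m - i, i.+1))%:R * (- x) ^+ i.+1) m.+1) //.
  by rewrite mulNr.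
move=> i hi; rewrite bin_small ?mul0r //; lia.
Qed.

Lemma AA_ext (R : ringType) (y : R) m N : (m.+1 <= N)%N ->
  AA y m = \sum_(j < N) ('C(m.+1, j.*2.+1))%:R * y ^+ j.
Proof.
move=> h; rewrite /AA (@sum_trunc _ (fun j => ('C(m.+1, j.*2.+1))%:R * y ^+ j) m.+1 N) //.
move=> i hi; rewrite bin_small ?mul0r //; lia.
Qed.

Lemma binAA m j : ('C(m.+3, j.+1) + 'C(m.+1, j.+1) =
   2 * 'C(m.+2, j.+1) + (if j is j'.+1 then 'C(m.+1, j') else 0))%N.
Proof.
case: j => [|j]; first by rewrite !bin1; lia.
have h1 := binS m.+2 j.+1. have h2 := binS m.+1 j.+1. have h3 := binS m.+1 j.
lia.
Qed.

Lemma AA_rec (R : comRingType) (y : R) m :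
  AA y m.+2 = 2 * AA y m.+1 - (1 - y) * AA y m.
Proof.
suff : AA y m.+2 - 2 * AA y m.+1 + AA y m = y * AA y m.
  move=> h.
  have -> : AA y m.+2 = (AA y m.+2 - 2 * AA y m.+1 + AA y m) - AA y m + 2 * AA y m.+1 by ring.
  rewrite h; ring.
have -> : AA y m.+2 - 2 * AA y m.+1 + AA y m = \sum_(j < m.+3)
   (('C(m.+3, j.*2.+1))%:R - 2 * ('C(m.+2, j.*2.+1))%:R + ('C(m.+1, j.*2.+1))%:R) * y ^+ j.
  rewrite (AA_ext y (leqnn m.+3)) (@AA_ext _ y m.+1 m.+3 ltac:(lia)) (@AA_ext _ y m m.+3 ltac:(lia)).
  rewrite mulr_sumr -sumrB -big_split /=; apply: eq_bigr => i _; ring.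
rewrite big_ord_recl /=.
have e0 : forall a b c d : nat, (a + b = 2 * c + d)%N ->
   a%:R - 2 * c%:R + b%:R = d%:R :> R.
  move=> a b c d e; apply/eqP; rewrite -subr_eq0; apply/eqP.
  transitivity ((a + b)%N%:R - (2 * c + d)%N%:R : R); first by rewrite !natrD ?natrM; ring.
  by rewrite e subrr.
rewrite (e0 _ _ _ _ (binAA m 0)) /= mul0r add0r.
rewrite (@AA_ext _ y m m.+2 ltac:(lia)) mulr_sumr.
apply: eq_bigr => i _; rewrite /bump /= add1n.
have := e0 _ _ _ _ (binAA m (i.*2.+2)); rewrite doubleS => <-.
rewrite exprS; ring.
Qed.

Lemma key (R : comRingType) (x : R) m :
  2 ^+ m * ee x m = AA (1 - 4 * x) m /\ 2 ^+ m.+1 * ee x m.+1 = AA (1 - 4 * x) m.+1.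
Proof.
elim: m => [|m [IH1 IH2]].
  rewrite /ee /AA !big_ord_recl !big_ord0 /=.
  split; rewrite /bump /= ?add0n ?addn0 ?subnn ?subn0 ?bin0 ?bin1 ?bin0n /=; rewrite ?(@bin_small 2 3) // !expr0 ?expr1 ?mulr1 ?mul1r ?addr0 ?mul0r ?add0r ?mulr1 ?addr0 ?mulr1; reflexivity.
split => //.
rewrite ee_rec AA_rec -IH1 -IH2 !exprS; ring.
Qed.

Lemma DcoefE n i : (0 < n)%N -> (i.*2 <= n)%N ->
  Dcoef n i = (2 * 'C(n.-1 - i, i))%N%:Z - ('C(n - i, i))%N%:Z.
Proof.
move=> n0 hi; rewrite /Dcoef.
have h := mul_bin_down (n - i) i.
have e : ((n - i).-1 = n.-1 - i)%N by lia.
rewrite e in h.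
have hz : ((n - i)%N%:Z != 0)%R by apply/eqP; lia.
rewrite -(mulzK ((2 * 'C(n.-1 - i, i))%N%:Z - ('C(n - i, i))%N%:Z) hz).
congr (_ %/ _)%Z.
move: h; set c1 := 'C(n - i, i); set c2 := 'C(n.-1 - i, i) => h.
nia.
Qed.

Lemma fcoefE n j : (j.*2.+1 <= n)%N ->
  fcoef n j = (3 * 'C(n, j.*2.+1))%N%:Z - ('C(n, j.*2))%N%:Z.
Proof.
move=> hj; rewrite /fcoef -!mul2n.
have h1 := mul_bin_down n.+1 (2 * j).+1.
have h2 := mul_bin_diag n.+1 (2 * j).
have hz : ((n.+1)%:Z != 0)%R by [].
rewrite -(mulzK ((3 * 'C(n, (2 * j).+1))%N%:Z - ('C(n, 2 * j))%N%:Z) hz).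
congr (_ %/ _)%Z.
move: h1 h2 => /=; set c := 'C(n.+1, (2 * j).+1); set a := 'C(n, (2 * j).+1);
  set b := 'C(n, 2 * j) => h1 h2.
nia.
Qed.

Lemma intrBn (R : ringType) (a b : nat) : ((a%:Z - b%:Z)%:~R : R) = a%:R - b%:R.
Proof. by rewrite mulrzBr. Qed.

Lemma hornerZ' (R : ringType) (c : R) (p : {poly R}) x : (c *: p).[x] = c * p.[x].
Proof. exact: hornerZ. Qed.

Lemma ident (R : comRingType) (n : nat) (x : R) : ~~ odd n ->
  2 ^+ n * (Dpoly n 1).[x] = (fpoly R n).[1 - 4 * x].
Proof.
move=> hn; have := odd_double_half n; rewrite (negbTE hn) add0n => <-.
case: (n./2) => [|l].
  by rewrite /Dpoly /fpoly /= big_ord0 addr0 hornerN hornerXn expr0 mul1r hornerN hornerC.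
rewrite doubleS; set m := l.*2.
have -> : Dpoly (m.+2) (1:R) = \sum_(i < l.+2) ((Dcoef m.+2 i)%:~R * 1 ^+ (m.+2 - 2 * i)) *: (- 'X) ^+ i.
  by rewrite /Dpoly /= /m doubleK.
have -> : fpoly R m.+2 = - 'X^(l.+1) + \sum_(j < l.+1) (fcoef m.+2 j)%:~R *: 'X^j.
  by rewrite /fpoly /= /m doubleK.
rewrite horner_sum.
under eq_bigr => i _ do rewrite hornerZ' horner_exp hornerN hornerX expr1n mulr1.
rewrite (eq_bigr (fun i : 'I_l.+2 => 2 * (('C(m.+1 - i, i))%:R * (-x) ^+ i)
     - ('C(m.+2 - i, i))%:R * (-x) ^+ i)); last first.
  move=> i _; rewrite DcoefE //=; last by have := ltn_ord i; rewrite /m; lia.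
  by rewrite intrBn natrM; ring.
rewrite sumrB -mulr_sumr.
have E1 : \sum_(i < l.+2) ('C(m.+1 - i, i))%:R * (-x) ^+ i = ee x m.+1.
  rewrite /ee (@sum_trunc _ (fun i => ('C(m.+1 - i, i))%:R * (-x) ^+ i) l.+2 m.+2) //.
    move=> i hi; rewrite bin_small ?mul0r //; rewrite /m; lia.
  rewrite /m; lia.
have E2 : \sum_(i < l.+2) ('C(m.+2 - i, i))%:R * (-x) ^+ i = ee x m.+2.
  rewrite /ee (@sum_trunc _ (fun i => ('C(m.+2 - i, i))%:R * (-x) ^+ i) l.+2 m.+3) //.
    move=> i hi; rewrite bin_small ?mul0r //; rewrite /m; lia.
  rewrite /m; lia.
rewrite E1 E2.
have [k1 k2] := key x m.+1.
have -> : 2 ^+ m.+2 * (2 * ee x m.+1 - ee x m.+2) =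
    4 * (2 ^+ m.+1 * ee x m.+1) - 2 ^+ m.+2 * ee x m.+2 by rewrite !exprS; ring.
rewrite k1 k2.
set y := 1 - 4 * x.
rewrite hornerD hornerN hornerXn horner_sum.
under eq_bigr => j _ do rewrite hornerZ' hornerXn.
rewrite (eq_bigr (fun j : 'I_l.+1 => (3 * ('C(m.+2, j.*2.+1))%:R - ('C(m.+2, j.*2))%:R) * y ^+ j)); last first.
  move=> j _; rewrite fcoefE; last by have := ltn_ord j; rewrite /m; lia.
  by rewrite intrBn natrM.
have A1 : AA y m.+1 = \sum_(j < l.+1) ('C(m.+2, j.*2.+1))%:R * y ^+ j.
  rewrite /AA (@sum_trunc _ (fun j => ('C(m.+2, j.*2.+1))%:R * y ^+ j) l.+1 m.+2) //.
    move=> i hi; rewrite bin_small ?mul0r //; rewrite /m; lia.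
  rewrite /m; lia.
have A2 : AA y m.+2 = \sum_(j < l.+1) ('C(m.+3, j.*2.+1))%:R * y ^+ j + y ^+ l.+1.
  rewrite /AA (@sum_trunc _ (fun j => ('C(m.+3, j.*2.+1))%:R * y ^+ j) l.+2 m.+3) //.
    by rewrite big_ord_recr /= -doubleS binn mul1r.
    move=> i hi; rewrite bin_small ?mul0r //; rewrite /m; lia.
  rewrite /m; lia.
rewrite A1 A2 mulr_sumr.
have -> : \sum_(j < l.+1) (3 * ('C(m.+2, j.*2.+1))%:R - ('C(m.+2, j.*2))%:R) * y ^+ j =
  \sum_(j < l.+1) 4 * (('C(m.+2, j.*2.+1))%:R * y ^+ j) - \sum_(j < l.+1) ('C(m.+3, j.*2.+1))%:R * y ^+ j.
  rewrite -sumrB; apply: eq_bigr => j _; rewrite (binS m.+2 (j.*2)) natrD; ring.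
ring.
Qed.

Theorem theorem3p2 (F : finFieldType) (p : nat) (hp : prime p) (hp3 : (3 < p)%N)
  (hchar : p \in [pchar F]) (n : nat) (hn : ~~ odd n) :
  (forall x : F, (Dpoly n 1).[x] = (2 ^+ n)^-1 * (fpoly F n).[1 - 4 * x]) /\
  (is_permpoly (Dpoly n (1 : F)) <-> is_permpoly (fpoly F n)).
Proof.
have two0 : (2 : F) != 0.
  apply/negP; rewrite -(dvdn_pcharf hchar) => /dvdn_leq h; have := h isT; lia.
have four0 : (4 : F) != 0.
  have -> : (4 : F) = 2 * 2 by rewrite -natrM.
  by rewrite mulf_neq0.
have tn0 : (2 : F) ^+ n != 0 by rewrite expf_neq0.
have Di : forall x : F, (Dpoly n 1).[x] = (2 ^+ n)^-1 * (fpoly F n).[1 - 4 * x].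
  by move=> x; rewrite -ident // mulKf.
split => //.
rewrite /is_permpoly; split => hb.
- have e : (fun c : F => (fpoly F n).[c]) =1
    (fun t => 2 ^+ n * t) \o (fun c : F => (Dpoly n 1).[c]) \o (fun c : F => (1 - c) / 4).
    move=> c /=; rewrite Di mulVKf //; congr (_.[_]).
    by rewrite mulrC mulfVK // subKr.
  apply: (eq_bij _ (fsym e)).
  apply: bij_comp; last first.
    exists (fun c : F => 1 - 4 * c) => c /=.
      by rewrite [4 * _]mulrC mulfVK // subKr.
    by rewrite subKr mulrC mulKf.
  apply: bij_comp => //.
  exists (fun t : F => (2 ^+ n)^-1 * t) => t /=; [by rewrite mulKf | by rewrite mulVKf].
- have e : (fun c : F => (Dpoly n 1).[c]) =1
    (fun t => (2 ^+ n)^-1 * t) \o (fun c : F => (fpoly F n).[c]) \o (fun c : F => 1 - 4 * c).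
    by move=> c /=; rewrite Di.
  apply: (eq_bij _ (fsym e)).
  apply: bij_comp; last first.
    exists (fun c : F => (1 - c) / 4) => c /=.
      by rewrite subKr mulrC mulKf.
    by rewrite [4 * _]mulrC mulfVK // subKr.
  apply: bij_comp => //.
  exists (fun t : F => 2 ^+ n * t) => t /=; [by rewrite mulVKf | by rewrite mulKf].
Qed.
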